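(* Let $Q_6(I,S)$ and $Q_6(J,T)$ be finite. A map $\varphi:Q_6(I,S)\to Q_6(J,T)$ is a surjective $pm$-morphism if and only if: (1) $\varphi(S)=T$ and $\varphi(\zeta(x))=\zeta(\varphi(x))$ for all $x\in S$; (2) $\varphi^{-1}(J)\subseteq I$; (3) $\varphi(x)\ne\varphi(y)$ for distinct $x,y\in\varphi^{-1}(J)$; (4) for every $x\in I\setminus\varphi^{-1}(J)$ there exists $u\in S\setminus\varphi^{-1}(J)$ with $u\ne x$ and $\varphi(u)=\varphi(x)$.
   Context: For a finite set $S$ with $|S|\ge3$ and $I\subseteq S$, $Q_6(I,S)$ is the finite poset with involution on $S\cup\zeta(S)$, where $\zeta(S)$ is a disjoint copy of $S$, $\zeta$ interchanges each $s\in S$ with its copy $\zeta(s)$, the topology is discrete, and the only strict comparabilities are: for $x,y\in S$, $x<\zeta(y)$ iff ($x\ne y$ or $x\notin I$). For $pm$-spaces $P,Q$, a $pm$-morphism $\varphi:P\to Q$ is a continuous order-preserving map with $\varphi\circ\zeta=\zeta\circ\varphi$ and $\mathrm{Min}(\varphi(x))\subseteq\varphi(\mathrm{Min}(x))$ for all $x\in P$, where $\mathrm{Min}(z)$ denotes the set of minimal elements of the space lying below $z$. *)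

(* Defs.v *)
From mathcomp Require Import all_boot.
Set Implicit Arguments. Unset Strict Implicit. Unset Printing Implicit Defensive.

(* Points of Q_6(I,S): inl s is s in S, inr s is its copy zeta(s). *)
Definition Q6pt (S : finType) := (S + S)%type.

Definition q6_zeta (S : finType) (x : Q6pt S) : Q6pt S :=
  match x with inl a => inr a | inr a => inl a end.

Definition q6_le (S : finType) (I : {set S}) (x y : Q6pt S) : bool :=
  (x == y) ||
  match x, y with
  | inl a, inr b => (a != b) || (a \notin I)
  | _, _ => false
  end.

Definition q6_lt (S : finType) (I : {set S}) (x y : Q6pt S) : bool :=
  (x != y) && q6_le I x y.

Definition q6_Min (S : finType) (I : {set S}) (z : Q6pt S) : {set Q6pt S} :=
  [set m | [forall y, ~~ q6_lt I y m] && q6_le I m z].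

(* pm-morphism Q_6(I,S) -> Q_6(J,T). Continuity is automatic since the
   topology of Q_6(I,S) is discrete, so it is omitted. *)
Definition q6_pm_morphism (S T : finType) (I : {set S}) (J : {set T})
  (phi : Q6pt S -> Q6pt T) : Prop :=
  [/\ (forall x y, q6_le I x y -> q6_le J (phi x) (phi y)),
      (forall x, phi (q6_zeta x) = q6_zeta (phi x)) &
      (forall x, q6_Min J (phi x) \subset phi @: q6_Min I x)].

Definition q6_preJ (S T : finType) (J : {set T}) (phi : Q6pt S -> Q6pt T)
  : {set Q6pt S} := [set p | [exists j in J, phi p == inl j]].

(* Main.v *)
Require Import Defs.
From mathcomp Require Import all_boot.

Lemma exists_neq (S : finType) (b : S) : 1 < #|S| -> exists a : S, a != b.
Proof.
move=> hS; have : 0 < #|[set~ b]| by rewrite cardsC1; case: #|S| hS => [|[]].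
by case/card_gt0P => a; rewrite !inE => h; exists a.
Qed.

Arguments exists_neq {S} b.

Lemma q6_Min_mem (S : finType) (I : {set S}) (z m : Q6pt S) : 1 < #|S| ->
  (m \in q6_Min I z) = (match m with inl a => q6_le I (inl a) z | inr _ => false end).
Proof.
move=> hS; rewrite inE; case: m => [a|b].
  have -> : [forall y, ~~ q6_lt I y (inl a)] = true.
    by apply/forallP => y; rewrite /q6_lt /q6_le; case: y => [c|c] /=; rewrite ?orbF ?andNb.
  by [].
have [a hab] := exists_neq b hS.
have -> : [forall y, ~~ q6_lt I y (inr b)] = false.
  apply/negbTE/forallPn; exists (inl a); rewrite negbK /q6_lt /q6_le /= hab.
  by [].
by [].
Qed.

Lemma preJ_mem (S T : finType) (J : {set T}) (phi : Q6pt S -> Q6pt T) p :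
  (p \in q6_preJ J phi) = (match phi p with inl j => j \in J | _ => false end).
Proof.
rewrite inE; case: (phi p) => [t|t].
  apply/existsP/idP => [[j /andP [hj /eqP [->]]] // | ht].
  by exists t; rewrite ht eqxx.
by apply/existsP => -[j /andP [_ /eqP]].
Qed.

Theorem lemma5p2 (S T : finType) (I : {set S}) (J : {set T})
  (hS : 3 <= #|S|) (hT : 3 <= #|T|) (phi : Q6pt S -> Q6pt T) :
  (q6_pm_morphism I J phi /\ (forall y, exists x, phi x = y)) <->
  [/\ [set phi (inl s) | s : S] = [set inl t | t : T]
        /\ (forall s : S, phi (q6_zeta (inl s)) = q6_zeta (phi (inl s))),
      q6_preJ J phi \subset [set inl i | i in I],
      (forall x y, x \in q6_preJ J phi -> y \in q6_preJ J phi -> x != y ->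
         phi x != phi y) &
      (forall x : S, x \in I -> inl x \notin q6_preJ J phi ->
         exists u : S, [/\ inl u \notin q6_preJ J phi, u != x &
                           phi (inl u) = phi (inl x)])].
Proof.
have hS1 : 1 < #|S| by exact: leq_trans hS.
have hT1 : 1 < #|T| by exact: leq_trans hT.
split.
  move=> [[hle hz hmin] hsurj].
  have hinl : forall s, exists t, phi (inl s) = inl t.
    move=> s; case E: (phi (inl s)) => [t|t]; first by exists t.
    exfalso; have [a ha] := exists_neq t hT1.
    move: (hmin (inl s)); rewrite E => /subsetP /(_ (inl a)).
    rewrite q6_Min_mem // /q6_le /= ha /= => /(_ isT) /imsetP [m].
    rewrite q6_Min_mem //; case: m => [c|c] //=.
    by rewrite /q6_le /= orbF => /eqP [->]; rewrite E.
  have hinr : forall s t, phi (inl s) = inl t -> phi (inr s) = inr t.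
    by move=> s t E; have := hz (inl s); rewrite /= E.
  split.
  - split; last by move=> s; apply: hz.
    apply/setP => y; apply/imsetP/imsetP.
      by move=> [s _ ->]; have [t ->] := hinl s; exists t.
    move=> [t _ ->]; have [[s|s] E] := hsurj (inl t); first by exists s.
    by have [u Eu] := hinl s; move: E; rewrite (hinr _ _ Eu).
  - apply/subsetP => p; rewrite preJ_mem; case: p => [s|s].
      have [t Et] := hinl s; rewrite Et => hj.
      apply/imsetP; exists s => //; apply/negPn/negP => hs.
      have := hle (inl s) (inr s); rewrite (hinr _ _ Et) Et /q6_le /= !eqxx hs hj /= ?orbT.
      by move=> /(_ isT).
    by have [t Et] := hinl s; rewrite (hinr _ _ Et).
  - move=> x y; rewrite !preJ_mem.
    case: x => [a|a]; last by have [t Et] := hinl a; rewrite (hinr _ _ Et).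
    case: y => [b|b]; last by have [t Et] := hinl b; rewrite (hinr _ _ Et).
    have [t Et] := hinl a; have [u Eu] := hinl b; rewrite Et Eu => ht hu hab.
    apply/negP => /eqP [etu]; subst u.
    have hab' : a != b by apply: contraNneq hab => ->.
    have := hle (inl a) (inr b); rewrite (hinr _ _ Eu) Et /q6_le /= hab' eqxx ht /=.
    by move=> /(_ isT).
  - move=> x hx; rewrite preJ_mem; have [t Et] := hinl x; rewrite Et => htJ.
    move: (hmin (inr x)); rewrite (hinr _ _ Et) => /subsetP /(_ (inl t)).
    rewrite q6_Min_mem // /q6_le /= eqxx htJ /= => /(_ isT) /imsetP [m].
    rewrite q6_Min_mem //; case: m => [a|a] //=.
    rewrite /q6_le /= => hm ea.
    exists a; split; first by rewrite preJ_mem -ea.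
      by apply: contraTneq hm => ->; rewrite eqxx hx.
    by rewrite -ea.
move=> [[hset hz] hpre hinj hex].
have hinl : forall s, exists t, phi (inl s) = inl t.
  move=> s; have : phi (inl s) \in [set phi (inl s) | s : S] by apply/imsetP; eexists.
  by rewrite hset => /imsetP [t _ ->]; exists t.
have hsurjT : forall t, exists s, phi (inl s) = inl t.
  move=> t; have : inl t \in [set phi (inl s) | s : S] by rewrite hset; apply/imsetP; exists t.
  by case/imsetP => s _ e; exists s.
have hinr : forall s t, phi (inl s) = inl t -> phi (inr s) = inr t.
  by move=> s t E; have := hz s; rewrite /= E.
have hzall : forall x, phi (q6_zeta x) = q6_zeta (phi x).
  case=> [s|s]; first exact: hz.
  by have [t Et] := hinl s; rewrite /= Et (hinr _ _ Et).
split; last first.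
  move=> y; case: (y : T + T) => t.
    by have [s Es] := hsurjT t; exists (inl s).
  by have [s Es] := hsurjT t; exists (inr s); rewrite (hinr _ _ Es).
split => //.
- move=> x y /orP [/eqP -> | h]; first by rewrite /q6_le eqxx.
  case: x h => [a|a] //; case: y => [b|b] //= h.
  have [t Et] := hinl a; have [u Eu] := hinl b.
  rewrite Et (hinr _ _ Eu) /q6_le /=.
  case: (boolP (t \in J)) => htJ; last by rewrite /= orbT.
  rewrite orbF; apply/eqP => etu; subst u.
  have ha : inl a \in q6_preJ J phi by rewrite preJ_mem Et.
  have hb : inl b \in q6_preJ J phi by rewrite preJ_mem Eu.
  have := subsetP hpre _ ha.
  case/imsetP => i hi [ei]; subst i.
  move: h; rewrite hi orbF => hab.
  have : inl a != inl b :> Q6pt S by apply: contraNneq hab => -[->].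
  by move=> /(hinj _ _ ha hb); rewrite Et Eu eqxx.
- move=> x; apply/subsetP => m; case: x => [s|s].
    have [t Et] := hinl s; rewrite Et q6_Min_mem //; case: m => [c|c] //.
    rewrite /q6_le /= orbF => /eqP [->]; apply/imsetP; exists (inl s) => //.
    by rewrite q6_Min_mem // /q6_le eqxx.
  have [t Et] := hinl s; rewrite (hinr _ _ Et) q6_Min_mem //; case: m => [c|c] //.
  rewrite /q6_le /= => hc.
  case: (eqVneq c t) => [ect|hct].
    subst c; move: hc; rewrite eqxx /= => htJ.
    case: (boolP (s \in I)) => hsI.
      have hs : inl s \notin q6_preJ J phi by rewrite preJ_mem Et.
      have [u [hu hus Eu]] := hex s hsI hs.
      apply/imsetP; exists (inl u); last by rewrite Eu Et.
      by rewrite q6_Min_mem // /q6_le /= hus.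
    apply/imsetP; exists (inl s); last by rewrite Et.
    by rewrite q6_Min_mem // /q6_le /= hsI orbT.
  have [a Ea] := hsurjT c.
  apply/imsetP; exists (inl a); last by rewrite Ea.
  rewrite q6_Min_mem // /q6_le /=; apply/orP; left.
  by apply: contraNneq hct => eas; move: Ea; rewrite eas Et => -[->].
Qed.
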